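(* Let $G$ be a finite group with neutral element $e$, and let $A$ be a finitely-generated associative algebra over a commutative ring $R$ with unit, graded by $G$, i.e. $A=\bigoplus_{g\in G}A_g$ as $R$-modules with $A_gA_{g'}\subseteq A_{gg'}$ for all $g,g'\in G$. If the neutral component $A_e$ (which is a subalgebra of $A$) has a Shirshov base of height $h$, then $A$ has a Shirshov base of height strictly less than $(h+1)|G|$.
   Context: All algebras are associative (not necessarily unital) algebras over a commutative ring $R$ with unit. A finite subset $S$ of an algebra $B$ is called a Shirshov base of $B$ of height $h$ if $B$ is linearly spanned (over $R$) by the elements of the form $a_1^{k_1}a_2^{k_2}\cdots a_n^{k_n}$ with $n\le h$, $k_1,\dots,k_n$ positive integers, and $a_1,\dots,a_n\in S$. *)

(* Defs.v *)
From HB Require Import structures.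
From mathcomp Require Import all_boot all_order all_algebra all_fingroup.
Set Implicit Arguments. Unset Strict Implicit. Unset Printing Implicit Defensive.
Import GRing.Theory.
Local Open Scope ring_scope.

Definition is_assoc_algebra (R : comPzRingType) (A : lmodType R)
  (mul : A -> A -> A) : Prop :=
  [/\ associative mul,
      (forall a b c, mul (a + b) c = mul a c + mul b c),
      (forall a b c, mul a (b + c) = mul a b + mul a c),
      (forall (r : R) a b, mul (r *: a) b = r *: mul a b)
    & (forall (r : R) a b, mul a (r *: b) = r *: mul a b)].

Definition lin_span (R : comPzRingType) (A : lmodType R) (P : A -> Prop)
  (x : A) : Prop :=
  exists (n : nat) (c : 'I_n -> R) (v : 'I_n -> A),
    (forall i, P (v i)) /\ x = \sum_(i < n) c i *: v i.

(* positive power: npow mul a k = a^(k+1) (no unit needed) *)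
Definition npow (A : Type) (mul : A -> A -> A) (a : A) (k : nat) : A :=
  iter k (mul a) a.

Definition wprod (A : Type) (mul : A -> A -> A) (x : A) (s : seq A) : A :=
  foldl mul x s.

(* the elements a_1^{k_1} ... a_n^{k_n} with 1 <= n <= h, k_i >= 1, a_i in S *)
Definition shirshov_word (A : eqType) (mul : A -> A -> A) (S : seq A)
  (h : nat) (w : A) : Prop :=
  exists (a : A) (k : nat) (rest : seq (A * nat)),
    [/\ a \in S, all (fun p => p.1 \in S) rest, ((size rest).+1 <= h)%N
      & w = wprod mul (npow mul a k) [seq npow mul p.1 p.2 | p <- rest]].

Definition shirshov_base (R : comPzRingType) (A : lmodType R)
  (mul : A -> A -> A) (B : A -> Prop) (S : seq A) (h : nat) : Prop :=
  (forall s, s \in S -> B s) /\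
  (forall x, B x <-> lin_span (shirshov_word mul S h) x).

Definition fin_gen_algebra (R : comPzRingType) (A : lmodType R)
  (mul : A -> A -> A) : Prop :=
  exists gens : seq A, forall x : A,
    lin_span (fun w => exists (x0 : A) (s : seq A),
                 x0 \in gens /\ all (mem gens) s /\ w = wprod mul x0 s) x.

Definition is_submodule (R : comPzRingType) (A : lmodType R) (P : A -> Prop) :=
  [/\ P 0, (forall a b, P a -> P b -> P (a + b))
    & (forall (r : R) a, P a -> P (r *: a))].

Definition is_G_grading (R : comPzRingType) (A : lmodType R)
  (mul : A -> A -> A) (gT : finGroupType) (Ag : gT -> A -> Prop) : Prop :=
  [/\ (forall g, is_submodule (Ag g)),
      (forall x : A, exists! f : {ffun gT -> A},
          (forall g, Ag g (f g)) /\ x = \sum_(g : gT) f g)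
    & (forall g g' a b, Ag g a -> Ag g' b -> Ag (g * g')%g (mul a b))].

(* Main.v *)
Require Import Defs.
From HB Require Import structures.
From mathcomp Require Import all_boot all_order all_algebra all_fingroup.
From mathcomp Require Import zify.
Local Open Scope ring_scope.
Import GRing.Theory.

Section Main.
Variables (R : comPzRingType) (A : lmodType R) (mul : A -> A -> A).
Hypothesis Halg : is_assoc_algebra mul.

Inductive span (P : A -> Prop) : A -> Prop :=
| span0 : span P 0
| spanP x : P x -> span P x
| spanD x y : span P x -> span P y -> span P (x + y)
| spanZ (r : R) x : span P x -> span P (r *: x).

Lemma lin_span_span P x : lin_span P x -> span P x.
Proof.
case=> n [c [v [Pv ->]]].
apply: (big_ind (span P)); [exact: span0 | exact: spanD|].
by move=> i _; apply: spanZ; apply: spanP.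
Qed.

Lemma span_lin_span P x : span P x -> lin_span P x.
Proof.
elim.
- by exists 0%N, (fun _ => 0), (fun _ => 0); split; [case | rewrite big_ord0].
- move=> y Py; exists 1%N, (fun _ => 1), (fun _ => y); split => //.
  by rewrite big_ord1 scale1r.
- move=> y z _ [n1 [c1 [v1 [P1 ->]]]] _ [n2 [c2 [v2 [P2 ->]]]].
  exists (n1 + n2)%N,
    (fun i => match split i with inl j => c1 j | inr j => c2 j end),
    (fun i => match split i with inl j => v1 j | inr j => v2 j end).
  split; first by move=> i; case: (split i).
  have E1 i : split (lshift n2 i) = inl i := unsplitK (inl i).
  have E2 i : split (rshift n1 i) = inr i := unsplitK (inr i).
  rewrite big_split_ord /=; congr (_ + _); apply: eq_bigr => i _.
    by rewrite E1.
  by rewrite E2.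
- move=> r y _ [n [c [v [Pv ->]]]].
  exists n, (fun i => r * c i), v; split => //.
  by rewrite scaler_sumr; apply: eq_bigr => i _; rewrite scalerA.
Qed.

Lemma span_mono (P Q : A -> Prop) x :
  (forall y, P y -> Q y) -> span P x -> span Q x.
Proof.
move=> PQ; elim; [exact: span0 | by move=> y /PQ; apply: spanP
  | by move=> ?? _ ? _ ?; apply: spanD | by move=> ?? _ ?; apply: spanZ].
Qed.

Lemma span_span (P : A -> Prop) x : span (span P) x -> span P x.
Proof.
elim; [exact: span0 | by [] | by move=> ?? _ ? _ ?; apply: spanD
  | by move=> ?? _ ?; apply: spanZ].
Qed.

Lemma mul0l y : mul 0 y = 0.
Proof.
case: Halg => _ mDl _ _ _.
have := mDl 0 0 y; rewrite addr0 => /eqP.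
by rewrite -subr_eq subrr eq_sym => /eqP.
Qed.

Lemma mul0r y : mul y 0 = 0.
Proof.
case: Halg => _ _ mDr _ _.
have := mDr y 0 0; rewrite addr0 => /eqP.
by rewrite -subr_eq subrr eq_sym => /eqP.
Qed.

Lemma span_mul (P Q PQ : A -> Prop) x y :
  (forall a b, P a -> Q b -> PQ (mul a b)) -> span P x -> span Q y ->
  span PQ (mul x y).
Proof.
case: Halg => _ mDl mDr mZl mZr.
move=> H sx sy; elim: sx.
- rewrite mul0l; exact: span0.
- move=> a Pa; elim: sy.
  + rewrite mul0r; exact: span0.
  + by move=> b Qb; apply: spanP; apply: H.
  + by move=> ?? _ ? _ ?; rewrite mDr; apply: spanD.
  + by move=> ?? _ ?; rewrite mZr; apply: spanZ.
- by move=> ?? _ ? _ ?; rewrite mDl; apply: spanD.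
- by move=> ?? _ ?; rewrite mZl; apply: spanZ.
Qed.

Lemma foldl_mul a b t : foldl mul (mul a b) t = mul a (foldl mul b t).
Proof.
case: Halg => massoc _ _ _ _.
by elim: t a b => [//|c t IH] a b /=; rewrite -massoc IH.
Qed.

Lemma wprod_cat x s1 y s2 :
  wprod mul x (s1 ++ y :: s2) = mul (wprod mul x s1) (wprod mul y s2).
Proof. by rewrite /wprod foldl_cat /= foldl_mul. Qed.


Variables (gT : finGroupType) (Ag : gT -> A -> Prop).
Hypothesis Hgr : is_G_grading mul Ag.
Variables (S0 : seq A) (h : nat) (H : seq (gT * A)).
Hypothesis HS0 : shirshov_base mul (Ag 1%g) S0 h.
Hypothesis HH : forall p, p \in H -> Ag p.1 p.2.

Definition S := S0 ++ map snd H.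
Definition Good k := span (shirshov_word mul S k).

Lemma good_mono k k' x : (k <= k')%N -> Good k x -> Good k' x.
Proof.
move=> kk; apply: span_mono => w [a [l [rest [aS rS sz ->]]]].
exists a, l, rest; split => //; exact: leq_trans kk.
Qed.

Lemma good_mul k1 k2 x y : Good k1 x -> Good k2 y -> Good (k1 + k2) (mul x y).
Proof.
apply: span_mul => _ _ [a [l [r1 [aS r1S sz1 ->]]]] [b [m [r2 [bS r2S sz2 ->]]]].
exists a, l, (r1 ++ (b, m) :: r2); split => //.
- by rewrite all_cat /= bS r1S r2S.
- move: sz1 sz2; rewrite size_cat /= => sz1 sz2; lia.
- by rewrite map_cat /= wprod_cat.
Qed.

Lemma good_letter a : a \in S -> Good 1 a.
Proof. by move=> aS; apply: spanP; exists a, 0%N, [::]. Qed.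

Lemma Ae_good x : Ag 1%g x -> Good h x.
Proof.
move=> Hx; case: HS0 => _ /(_ x) [/(_ Hx) /lin_span_span + _]; apply: span_mono.
move=> w [a [l [rest [aS rS sz ->]]]]; exists a, l, rest; split => //.
  by rewrite mem_cat aS.
by apply/allP => p /(allP rS) /= pS; rewrite mem_cat pS.
Qed.

Definition wp (x : gT * A) (s : seq (gT * A)) := wprod mul x.2 (map snd s).
Definition deg (w : seq (gT * A)) := foldr (fun p g => (p.1 * g)%g) 1%g w.

Lemma wp_cat x s1 y s2 : wp x (s1 ++ y :: s2) = mul (wp x s1) (wp y s2).
Proof. by rewrite /wp map_cat /= wprod_cat. Qed.

Lemma deg_cat w1 w2 : deg (w1 ++ w2) = (deg w1 * deg w2)%g.
Proof. by elim: w1 => [|p w1 IH] /=; rewrite ?mul1g // IH mulgA. Qed.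

Lemma wp_hom x s : all (mem H) (x :: s) -> Ag (deg (x :: s)) (wp x s).
Proof.
case: Hgr => _ _ Hm.
elim/last_ind: s => [|s y IH].
  by rewrite /= andbT /deg /= mulg1 => /HH.
rewrite -cats1 -cat_cons all_cat => /andP [hs /= /andP [hy _]].
rewrite deg_cat wp_cat /= mulg1 mulgA; apply: Hm; [exact: IH | exact: HH].
Qed.

Lemma split_word (w : seq (gT * A)) : exists w1 w2, [/\ w = w1 ++ w2, deg w1 = 1%g
  & forall k, (0 < k)%N -> (k <= size w2)%N -> deg (take k w2) != 1%g].
Proof.
elim/last_ind: w => [|w z [w1 [w2 [-> d1 Hk]]]].
  by exists [::], [::]; split => // -[].
case: (eqVneq (deg (rcons (w1 ++ w2) z)) 1%g) => hd.
  by exists (rcons (w1 ++ w2) z), [::]; split => //; [rewrite cats0 | case].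
exists w1, (rcons w2 z); split; [by rewrite rcons_cat | exact: d1 |].
move=> k k0; rewrite size_rcons leq_eqVlt ltnS => /orP [/eqP -> | kle].
  by rewrite -(size_rcons w2 z) take_size; move: hd; rewrite rcons_cat deg_cat d1 mul1g.
by rewrite -cats1 takel_cat //; apply: Hk.
Qed.


Lemma letter_good p : p \in H -> Good 1 p.2.
Proof. by move=> pH; apply: good_letter; rewrite mem_cat map_f ?orbT. Qed.

Lemma main_claim n : forall (X : {set gT}) x s, all (mem H) (x :: s) ->
  (forall k, (k <= size (x :: s))%N -> deg (take k (x :: s)) \in X) ->
  (#|X| <= n)%N -> Good (n * h.+1).-1 (wp x s).
Proof.
elim: n => [|n IH] X x s Hall Hpre Hcard.
  have := Hpre 0%N isT; rewrite take0.
  by move: Hcard; rewrite leqn0 => /eqP /cards0_eq ->; rewrite inE.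
have [w1 [w2 [Ew d1 Hne]]] := split_word (x :: s).
case: w2 Ew Hne => [|y Q] Ew Hne.
  rewrite cats0 in Ew; apply: (@good_mono h); first lia.
  by apply: Ae_good; rewrite -d1 -Ew; apply: wp_hom.
rewrite Ew in Hpre Hall.
set X' := (y.1^-1 *: (X :\ 1%g))%g.
have HX' k : (k <= size Q)%N -> deg (take k Q) \in X'.
  move=> kle; rewrite mem_lcoset invgK in_setD1.
  have := Hne k.+1 isT; rewrite /= ltnS kle => /(_ isT) /= ->.
  have := Hpre (size w1 + k.+1)%N; rewrite size_cat /= takeD take_size_cat //.
  by rewrite drop_size_cat //= deg_cat d1 mul1g; apply; lia.
have cX' : (#|X'| <= n)%N.
  have := cardsD1 1%g X; rewrite card_lcoset.
  by have := Hpre 0%N isT; rewrite take0 /= => -> /= e; move: Hcard; rewrite e add1n ltnS.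
have n1 : (0 < n)%N.
  apply: leq_trans cX'; apply/card_gt0P; exists 1%g.
  by have := HX' 0%N isT; rewrite take0.
have Hsuf : Good (n * h.+1) (wp y Q).
  case: Q Ew HX' Hall {Hne Hpre} => [|q Q'] Ew HX' Hall'.
    apply: (@good_mono 1%N); first lia.
    apply: letter_good; move: Hall'; rewrite all_cat /= => /andP [_ /andP [] //].
  rewrite -[y :: q :: Q']/([::] ++ y :: q :: Q') in Hall'.
  rewrite -[q :: Q']/([::] ++ q :: Q') wp_cat.
  apply: (@good_mono (1 + (n * h.+1).-1)); first lia.
  apply: good_mul; first apply: letter_good.
    by move: Hall'; rewrite all_cat /= => /andP [_ /andP []].
  apply: (IH X') => //.
  by move: Hall'; rewrite !all_cat /= => /andP [_ /andP [_ ->]].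
case: w1 Ew d1 Hall {Hpre Hne} => [|a s1] Ew d1 Hall.
  case: Ew => -> ->; apply: good_mono Hsuf; lia.
case: Ew => -> ->; rewrite wp_cat.
apply: (@good_mono (h + n * h.+1)); first lia.
apply: good_mul => //; apply: Ae_good; rewrite -d1; apply: wp_hom.
by move: Hall; rewrite cat_cons /= all_cat => /andP [-> /andP [-> _]].
Qed.


Lemma all_good x s : all (mem H) (x :: s) -> Good (#|gT| * h.+1).-1 (wp x s).
Proof.
move=> Hall; apply: (main_claim _ setT) => //.
  by move=> k _; rewrite inE.
by rewrite cardsT.
Qed.

Lemma gens_good (gens : seq A) :
  (forall x, x \in gens -> exists f : {ffun gT -> A},
      (forall g, (g, f g) \in H) /\ x = \sum_g f g) ->
  forall x0 s, x0 \in gens -> all (mem gens) s ->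
  Good (#|gT| * h.+1).-1 (wprod mul x0 s).
Proof.
move=> Hf.
pose HW a := exists x s, all (mem H) (x :: s) /\ a = wp x s.
pose L a := exists p, p \in H /\ a = p.2.
have Lsp x : x \in gens -> span L x.
  move=> /Hf [f [Hfg ->]]; apply: (big_ind (span L)); [exact: span0 | exact: spanD|].
  by move=> g _; apply: spanP; exists (g, f g).
move=> x0 s Hx0 Hs; apply: span_span; apply: (span_mono HW).
  by move=> _ [x [s' [Hall ->]]]; apply: all_good.
elim/last_ind: s Hs => [|s y IH].
  move=> _; apply: (span_mono L); last exact: Lsp.
  by move=> _ [p [pH ->]]; exists p, [::]; rewrite /= pH.
rewrite -cats1 all_cat /= andbT => /andP [Hs Hy].
rewrite cats1 /wprod foldl_rcons.
apply: (span_mul HW L); [|exact: IH|exact: Lsp].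
move=> _ _ [x [s' [Hall ->]]] [p [pH ->]]; exists x, (rcons s' p); split.
  by rewrite -cats1 -cat_cons all_cat Hall /= pH.
by rewrite -cats1 wp_cat.
Qed.

End Main.

Theorem theorem2 (R : comPzRingType) (A : lmodType R) (mul : A -> A -> A)
  (gT : finGroupType) (Ag : gT -> A -> Prop) (h : nat) :
  is_assoc_algebra mul ->
  fin_gen_algebra mul ->
  is_G_grading mul Ag ->
  (exists S : seq A, shirshov_base mul (Ag 1%g) S h) ->
  exists (S : seq A) (h' : nat),
    (h' < (h + 1) * #|gT|)%N /\ shirshov_base mul (fun _ => True) S h'.
Proof.
move=> Halg [gens Hgen] Hgr [S0 HS0].
have [H [HH Hf]] : exists H : seq (gT * A),
    (forall p, p \in H -> Ag p.1 p.2) /\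
    forall x, x \in gens -> exists f : {ffun gT -> A},
      (forall g, (g, f g) \in H) /\ x = \sum_g f g.
  case: Hgr => _ Hdec _; elim: gens {Hgen} => [|x gens [H [HH Hf]]].
    by exists [::]; split => // x; rewrite in_nil.
  have [f [[Hfg Hx] _]] := Hdec x.
  exists ([seq (g, f g) | g <- enum gT] ++ H); split.
    by move=> p; rewrite mem_cat => /orP [/mapP [g _ ->] | /HH].
  move=> y; rewrite inE => /orP [/eqP -> | /Hf [f' [Hf' ->]]].
    by exists f; split => // g; rewrite mem_cat map_f // mem_enum.
  by exists f'; split => // g; rewrite mem_cat Hf' orbT.
exists (S0 ++ map snd H), (#|gT| * h.+1).-1; split.
  have g0 : (0 < #|gT|)%N by apply/card_gt0P; exists 1%g.
  rewrite addn1 mulnC; set m := (_ * _)%N.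
  have : (0 < m)%N by rewrite /m muln_gt0 g0.
  lia.
split => // x; split => // _.
apply: span_lin_span.
have := Hgen x => /lin_span_span; move/(span_mono _) => Hs.
apply: span_span; apply: Hs => w [x0 [s [Hx0 [Hs' ->]]]].
exact: (@gens_good R A mul Halg gT Ag Hgr S0 h H HS0 HH gens Hf x0 s Hx0 Hs').
Qed.
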